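(* Let $\mathcal{V}$ be a proper variety of groups (for example, the variety of abelian groups), and let $F:{\sf Gr}\to{\sf Gr}$ be a functor on the category of groups together with a natural transformation $\varepsilon:F\to\mathrm{Id}_{\sf Gr}$, such that $F(G)\in\mathcal{V}$ for every group $G$. Then $\varepsilon$ is trivial, i.e. $\varepsilon_G:F(G)\to G$ is the trivial homomorphism for every group $G$.
   Context: A variety of groups is the class of all groups satisfying a fixed system of identities (equivalently, a full subcategory closed under small products, homomorphic images and subgroups); it is proper if it is not the class of all groups. *)

(* Defs.v *)
Set Implicit Arguments.

Record Group := {
  carrier :> Type;
  gmul : carrier -> carrier -> carrier;
  ginv : carrier -> carrier;
  gone : carrier;
  gmul_assoc : forall x y z, gmul x (gmul y z) = gmul (gmul x y) z;
  gmul_1l : forall x, gmul gone x = x;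
  gmul_1r : forall x, gmul x gone = x;
  gmul_Vl : forall x, gmul (ginv x) x = gone;
  gmul_Vr : forall x, gmul x (ginv x) = gone
}.

Record Hom (G H : Group) := {
  hfun :> G -> H;
  hfun_mul : forall x y, hfun (gmul G x y) = gmul H (hfun x) (hfun y)
}.

Definition id_hom (G : Group) : Hom G G :=
  {| hfun := fun x => x; hfun_mul := fun x y => eq_refl |}.

Definition comp_hom (G H K : Group) (g : Hom H K) (f : Hom G H) : Hom G K.
Proof.
  refine {| hfun := fun x => g (f x) |}.
  intros x y; rewrite (hfun_mul f), (hfun_mul g); reflexivity.
Defined.

Inductive word :=
| wvar : nat -> word
| wone : word
| wmul : word -> word -> word
| winv : word -> word.

Fixpoint weval (G : Group) (v : nat -> G) (w : word) : G :=
  match w with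
  | wvar n => v n
  | wone => gone G
  | wmul a b => gmul G (weval G v a) (weval G v b)
  | winv a => ginv G (weval G v a)
  end.

Definition satisfies (G : Group) (w : word) : Prop :=
  forall v : nat -> G, weval G v w = gone G.

(* A variety is given by a system of laws (identities w = 1). *)
Definition variety := word -> Prop.

Definition in_variety (V : variety) (G : Group) : Prop :=
  forall w, V w -> satisfies G w.

Definition proper_variety (V : variety) : Prop :=
  exists G : Group, ~ in_variety V G.

(* Endofunctor of Gr (morphism equality is pointwise, i.e. equality of
   underlying maps). *)
Record Functor := {
  fobj :> Group -> Group;
  fmap : forall G H : Group, Hom G H -> Hom (fobj G) (fobj H);
  fmap_id : forall G (x : fobj G), fmap (id_hom G) x = x;
  fmap_comp : forall G H K (g : Hom H K) (f : Hom G H) (x : fobj G),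
      fmap (comp_hom g f) x = fmap g (fmap f x)
}.

Record NatToId (F : Functor) := {
  eps :> forall G : Group, Hom (F G) G;
  eps_natural : forall G H (f : Hom G H) (x : F G),
      eps H (fmap F f x) = f (eps G x)
}.

(* Main.v *)
Require Import Defs.
From Stdlib Require Import Classical ClassicalEpsilon FunctionalExtensionality.

Section GL.
Variable G : Group.
Lemma g_cancel1 (a : G) : gmul G a a = a -> a = gone G.
Proof.
  intros H. rewrite <- (gmul_1l G a), <- (gmul_Vl G a), <- gmul_assoc, H.
  reflexivity.
Qed.
Lemma g_inv_unique (a b : G) : gmul G a b = gone G -> b = ginv G a.
Proof.
  intros H. rewrite <- (gmul_1l G b). rewrite <- (gmul_Vl G a).
  rewrite <- gmul_assoc, H, gmul_1r. reflexivity.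
Qed.
Lemma g_inv1 : ginv G (gone G) = gone G.
Proof. symmetry. apply g_inv_unique. apply gmul_1l. Qed.
End GL.

Lemma hom_one (G H : Group) (f : Hom G H) : f (gone G) = gone H.
Proof. apply g_cancel1. rewrite <- hfun_mul, gmul_1l. reflexivity. Qed.

Lemma hom_inv (G H : Group) (f : Hom G H) (x : G) : f (ginv G x) = ginv H (f x).
Proof. apply g_inv_unique. rewrite <- hfun_mul, gmul_Vr. apply hom_one. Qed.

Lemma hom_weval (G H : Group) (f : Hom G H) (v : nat -> G) (w : word) :
  f (weval G v w) = weval H (fun i => f (v i)) w.
Proof.
  induction w; simpl.
  - reflexivity.
  - apply hom_one.
  - rewrite hfun_mul, IHw1, IHw2. reflexivity.
  - rewrite hom_inv, IHw. reflexivity.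
Qed.


Section SD.
Variables G W : Group.
Definition SC := ((G -> W) * G)%type.
Definition sdmul (p q : SC) : SC :=
  (fun h => gmul W (fst p h) (fst q (gmul G h (snd p))), gmul G (snd p) (snd q)).
Definition sdinv (p : SC) : SC :=
  (fun h => ginv W (fst p (gmul G h (ginv G (snd p)))), ginv G (snd p)).
Definition sdone : SC := (fun _ => gone W, gone G).

Lemma pair_ext (p q : SC) : (forall h, fst p h = fst q h) -> snd p = snd q -> p = q.
Proof.
  destruct p as [a b], q as [c d]; simpl; intros H1 H2.
  rewrite (functional_extensionality a c H1), H2. reflexivity.
Qed.

Definition SDG : Group.
Proof.
  refine {| carrier := SC; gmul := sdmul; ginv := sdinv; gone := sdone |}.
  - intros x y z; apply pair_ext; simpl.
    + intros h. rewrite !gmul_assoc. reflexivity.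
    + apply gmul_assoc.
  - intros x; apply pair_ext; simpl.
    + intros h. rewrite gmul_1l, gmul_1r. reflexivity.
    + apply gmul_1l.
  - intros x; apply pair_ext; simpl.
    + intros h. rewrite gmul_1r. reflexivity.
    + apply gmul_1r.
  - intros x; apply pair_ext; simpl.
    + intros h. apply gmul_Vl.
    + apply gmul_Vl.
  - intros x; apply pair_ext; simpl.
    + intros h. rewrite <- (gmul_assoc G), (gmul_Vr G), (gmul_1r G), (gmul_Vr W). reflexivity.
    + apply gmul_Vr.
Defined.

Definition iota : Hom G SDG.
Proof.
  refine {| hfun := fun a : G => ((fun _ => gone W), a) : SDG |}.
  intros x y. apply pair_ext; simpl.
  - intros h. rewrite gmul_1l. reflexivity.
  - reflexivity.
Defined.

Definition conjh (f : SDG) : Hom SDG SDG.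
Proof.
  refine {| hfun := fun k : SDG => gmul SDG (gmul SDG f k) (ginv SDG f) |}.
  intros x y.
  rewrite <- !(gmul_assoc SDG). f_equal. f_equal.
  rewrite !(gmul_assoc SDG). rewrite (gmul_Vl SDG), (gmul_1l SDG). reflexivity.
Defined.

Lemma weval_SD (s : nat -> SDG) (w : word) :
  (forall i, snd (s i) = gone G) ->
  snd (weval SDG s w) = gone G /\
  forall h, fst (weval SDG s w) h = weval W (fun i => fst (s i) h) w.
Proof.
  intros Hs. induction w; simpl.
  - split; [apply Hs | reflexivity].
  - split; reflexivity.
  - destruct IHw1 as [A1 B1], IHw2 as [A2 B2]. split.
    + rewrite A1, A2. apply gmul_1l.
    + intros h. rewrite A1, gmul_1r, B1, B2. reflexivity.
  - destruct IHw as [A B]. split.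
    + rewrite A. symmetry. apply g_inv_unique. apply gmul_1l.
    + intros h. rewrite A. replace (ginv G (gone G)) with (gone G).
      * rewrite gmul_1r, B. reflexivity.
      * apply g_inv_unique. apply gmul_1l.
Qed.
End SD.

Theorem corollary3p11 (V : variety) (HV : proper_variety V)
  (F : Functor) (e : NatToId F)
  (HF : forall G : Group, in_variety V (F G)) :
  forall (G : Group) (x : F G), e G x = gone G.
Proof.
  intros G x. destruct HV as [W HW].
  apply NNPP; intros Hg. apply HW.
  set (g := e G x) in *.
  intros w Vw v.
  set (K := SDG G W).
  set (y := fmap F (iota G W) x).
  set (delta := fun (a : W) (h : G) =>
          if excluded_middle_informative (h = gone G) then a else gone W).
  set (f := fun a : W => ((delta a, gone G) : K)).
  set (z := fun i => gmul (F K) (fmap F (@conjh G W (f (v i))) y) (ginv (F K) y)).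
  assert (Hz : forall i, e K (z i) = gmul K (gmul K (gmul K (f (v i)) (iota G W g))
                                              (ginv K (f (v i)))) (ginv K (iota G W g))).
  { intros i. unfold z. rewrite hfun_mul, hom_inv, eps_natural. unfold y. rewrite !eps_natural. reflexivity. }
  assert (Hsnd : forall i, snd (e K (z i)) = gone G).
  { intros i. rewrite Hz. simpl. rewrite gmul_1l, g_inv1, gmul_1r. apply gmul_Vr. }
  assert (Hfst : forall i, fst (e K (z i)) (gone G) = v i).
  { intros i. rewrite Hz. simpl. rewrite !(gmul_1l G), (g_inv1 G), (gmul_1r G).
    rewrite !(gmul_1r W), (g_inv1 W), (gmul_1r W). unfold delta.
    destruct (excluded_middle_informative (gone G = gone G)) as [_|C]; [|now elim C].
    destruct (excluded_middle_informative (g = gone G)) as [C|_]; [now elim Hg|].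
    rewrite (g_inv1 W), (gmul_1r W). reflexivity. }
  destruct (@weval_SD G W (fun i => e K (z i)) w Hsnd) as [_ H2].
  specialize (H2 (gone G)).
  rewrite <- hom_weval, (HF K w Vw z), hom_one in H2. simpl in H2.
  rewrite H2. f_equal. apply functional_extensionality. intros i. symmetry. apply Hfst.
Qed.
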